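(* Let $l\ge1$ and work in $\mathfrak{OA}_{1,2l}=\mathfrak{OA}/\mathfrak I_{(t-1)^{2l}}$, writing $X_k,Y_k$ for the images. The operator $\mathrm{ad}\,X_0$ on $\mathfrak{OA}_{1,2l}$ is diagonalizable with eigenvalues $0,4,-4$, each eigenspace being $l$-dimensional, with bases: eigenvalue $0$: $X_0$ and $\sum_{k=2j-2}^{2l-1}(-1)^k\binom{k-1}{2j-4}X_k$ for $2\le j\le l$; eigenvalue $\pm4$: $2Y_{2j-1}\pm\Big(X_{2j-1}-\sum_{k=2j-1}^{2l-1}(-1)^k\binom{k-1}{2j-2}X_k\Big)$ for $1\le j\le l$. Moreover the $0$-eigenvectors commute with each other.
   Context: Work over $\mathbb C$. $\mathfrak{sl}_2$ has basis $e,f,h$ with $[e,f]=h$, $[h,e]=2e$, $[h,f]=-2f$. The Onsager algebra is the Lie subalgebra $\mathfrak{OA}=\{p(t)e+p(t^{-1})f+q(t)h:\ p,q\in\mathbb C[t,t^{-1}],\ q(t^{-1})=-q(t)\}$ of the loop algebra $\mathbb C[t,t^{-1}]\otimes\mathfrak{sl}_2$ (bracket $[px,qy]=pq[x,y]$). $\mathfrak I_{(t-1)^L}=\{p(t)e+p(t^{-1})f+q(t)h\in\mathfrak{OA}: p,q\in(t-1)^L\mathbb C[t,t^{-1}]\}$. For $k\ge0$, $X_k=2(t-1)^ke+2(t^{-1}-1)^kf$ and $Y_k=(-1)^k\big((t-1)^k-(t^{-1}-1)^k\big)h$, elements of $\mathfrak{OA}$. $\binom xa=x(x-1)\cdots(x-a+1)/a!$,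 $\binom x0=1$. *)

(* Defs.v *)
From HB Require Import structures.
From mathcomp Require Import all_boot all_order all_algebra.
Set Implicit Arguments. Unset Strict Implicit. Unset Printing Implicit Defensive.
Import Order.TTheory GRing.Theory Num.Theory.
Local Open Scope ring_scope.

(* Laurent polynomials C[t,t^-1] are realised inside the field of rational
   functions RF C = {fraction {poly C}}, with t = 'X%:F. *)

Definition RF (C : numClosedFieldType) := {fraction {poly C}}.

Local Notation "x %:F" := (@FracField.tofrac _ x).

Definition tt (C : numClosedFieldType) : RF C := ('X)%:F.

Definition cst (C : numClosedFieldType) (c : C) : RF C := (c%:P)%:F.

(* x is a Laurent polynomial divisible by (t-1)^L in C[t,t^-1]
   (L = 0: x is any Laurent polynomial) *)
Definition in_tm1_ideal (C : numClosedFieldType) (L : nat) (x : RF C) : Prop :=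
  exists (n : nat) (p : {poly C}), x = (('X - 1) ^+ L * p)%:F / tt C ^+ n.

Definition is_laurent (C : numClosedFieldType) (x : RF C) : Prop :=
  in_tm1_ideal 0 x.

(* laurent_inv x y  <->  x = x(t) is a Laurent polynomial and y = x(t^-1). *)
Definition laurent_inv (C : numClosedFieldType) (x y : RF C) : Prop :=
  exists (n : nat) (p : {poly C}),
    x = p%:F / tt C ^+ n /\
    y = (map_poly (@cst C) p).[(tt C)^-1] * tt C ^+ n.

(* Elements a e + b f + c h of the loop algebra, as triples ((a, b), c). *)
Definition loop (C : numClosedFieldType) := (RF C * RF C * RF C)%type.

Definition ce (C : numClosedFieldType) (v : loop C) : RF C := v.1.1.
Definition cf (C : numClosedFieldType) (v : loop C) : RF C := v.1.2.
Definition ch (C : numClosedFieldType) (v : loop C) : RF C := v.2.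

Definition lscale (C : numClosedFieldType) (c : C) (v : loop C) : loop C :=
  ((cst c * ce v, cst c * cf v), cst c * ch v).

(* Lie bracket of sl2 (x) C[t,t^-1]:  [e,f]=h, [h,e]=2e, [h,f]=-2f *)
Definition lbr (C : numClosedFieldType) (u v : loop C) : loop C :=
  ((2%:R * (ch u * ce v - ce u * ch v),
    2%:R * (cf u * ch v - ch u * cf v)),
    ce u * cf v - cf u * ce v).

(* membership in the Onsager algebra:
   p(t) e + p(t^-1) f + q(t) h with q(t^-1) = - q(t) *)
Definition inOA (C : numClosedFieldType) (v : loop C) : Prop :=
  laurent_inv (ce v) (cf v) /\ laurent_inv (ch v) (- ch v).

Definition inI (C : numClosedFieldType) (L : nat) (v : loop C) : Prop :=
  inOA v /\ in_tm1_ideal L (ce v) /\ in_tm1_ideal L (ch v).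

Definition Xk (C : numClosedFieldType) (k : nat) : loop C :=
  ((2%:R * (tt C - 1) ^+ k, 2%:R * ((tt C)^-1 - 1) ^+ k), 0).

Definition Yk (C : numClosedFieldType) (k : nat) : loop C :=
  ((0, 0), (-1) ^+ k * ((tt C - 1) ^+ k - ((tt C)^-1 - 1) ^+ k)).

Definition adX0 (C : numClosedFieldType) (v : loop C) : loop C := lbr (Xk C 0) v.

(* v is a lam-eigenvector of ad X_0 in OA / I_{(t-1)^L} (v taken in OA;
   "modulo I", nonzero-ness not required here) *)
Definition eig_mod (C : numClosedFieldType) (L : nat) (lam : C) (v : loop C) : Prop :=
  inOA v /\ inI L (adX0 v - lscale lam v).

Definition eigenbasis_mod (C : numClosedFieldType) (L : nat) (lam : C) (m : nat)
  (B : 'I_m -> loop C) : Prop :=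
  [/\ (forall i, eig_mod L lam (B i)),
      (forall c : 'I_m -> C, inI L (\sum_(i < m) lscale (c i) (B i)) ->
         forall i, c i = 0)
    & (forall w, eig_mod L lam w ->
         exists c : 'I_m -> C, inI L (w - \sum_(i < m) lscale (c i) (B i)))].

Definition B0 (C : numClosedFieldType) (l : nat) (i : 'I_l) : loop C :=
  let j := i.+1 in
  if j == 1%N then Xk C 0 else
  \sum_(2 * j - 2 <= k < 2 * l)
     lscale ((-1) ^+ k * ('C(k - 1, 2 * j - 4))%:R) (Xk C k).

Definition Bpm (C : numClosedFieldType) (l : nat) (s : C) (i : 'I_l) : loop C :=
  let j := i.+1 in
  lscale 2%:R (Yk C (2 * j - 1)) +
  lscale s (Xk C (2 * j - 1) -
            \sum_(2 * j - 1 <= k < 2 * l)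
               lscale ((-1) ^+ k * ('C(k - 1, 2 * j - 2))%:R) (Xk C k)).

Arguments B0 C l i : clear implicits.
Arguments Bpm C l s i : clear implicits.

(* Main.v *)
Require Import Defs.
From HB Require Import structures.
From mathcomp Require Import all_boot all_order all_algebra.
From mathcomp.algebra_tactics Require Import ring.
From mathcomp Require Import zify.
Set Implicit Arguments. Unset Strict Implicit. Unset Printing Implicit Defensive.
Import Order.TTheory GRing.Theory Num.Theory.
Local Open Scope ring_scope.

Section Gen.
Variable K : fieldType.
Lemma fr_add (a b x y : K): x != 0 -> y != 0 -> a/x + b/y = (a*y + b*x)/(x*y).
Proof. move=> hx hy. field. by rewrite hx hy. Qed.
Lemma fr_cancel (P Q t : K) n m : t != 0 -> P * (t^-1) ^+ m = Q * (t^-1) ^+ n ->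
  P * t ^+ n = Q * t ^+ m.
Proof.
move=> ht h.
have htm : t ^+ m != 0 by rewrite expf_neq0.
have htn : t ^+ n != 0 by rewrite expf_neq0.
move: h; rewrite !exprVn.
move: htm htn; move: (t ^+ m) (t ^+ n) => a b ha hb h.
have := congr1 (fun z => z * (a * b)) h => /=.
move=> e; transitivity (P * a^-1 * (a * b)); first by field; rewrite ha.
by rewrite e; field; rewrite hb.
Qed.
Lemma fr_add2 (P Q t : K) n m : t != 0 ->
  (P * (t^-1) ^+ m + Q * (t^-1) ^+ n) * t ^+ (n + m) = P * t ^+ n + Q * t ^+ m.
Proof.
move=> ht; have htm : t ^+ m != 0 by rewrite expf_neq0.
have htn : t ^+ n != 0 by rewrite expf_neq0.
rewrite !exprVn exprD.
move: htm htn; move: (t ^+ m) (t ^+ n) => a b ha hb.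
by field; rewrite ha hb.
Qed.
End Gen.

Section S.
Variable C : numClosedFieldType.
Local Notation RF := (RF C).
Local Notation F := (@FracField.tofrac {poly C}).
Local Notation t := (tt C).
Local Notation I := (@in_tm1_ideal C).
Local Notation LI := (@laurent_inv C).

HB.instance Definition _ := GRing.RMorphism.copy (@cst C) ((@FracField.tofrac {poly C}) \o polyC).

Lemma t_neq0 : t != 0.
Proof. by rewrite /tt tofrac_eq0 polyX_eq0. Qed.
Lemma tn_neq0 n : t ^+ n != 0.
Proof. by rewrite expf_neq0 // t_neq0. Qed.

Lemma cstE c : cst c = F c%:P. Proof. by []. Qed.

Definition u : RF := t - 1.
Definition ub : RF := t^-1 - 1.

Lemma FXm1 : F ('X - 1) = u.
Proof. by rewrite tofracB tofrac1. Qed.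

Lemma I_def d x : I d x <-> exists n p, x = F (('X - 1) ^+ d * p) / t ^+ n.
Proof. by []. Qed.

Lemma I_0 d : I d 0.
Proof. by exists 0%N, 0; rewrite mulr0 tofrac0 mul0r. Qed.

Lemma I_add d x y : I d x -> I d y -> I d (x + y).
Proof.
move=> [n [p ->]] [m [q ->]]; exists (n + m)%N, (p * 'X^m + q * 'X^n).
rewrite mulrDr !mulrA !tofracD !tofracM !tofracXn /= -/t exprD.
by rewrite fr_add ?tn_neq0.
Qed.

Lemma I_mul d e x y : I d x -> I e y -> I (d + e) (x * y).
Proof.
move=> [n [p ->]] [m [q ->]]; exists (n + m)%N, (p * q).
rewrite mulf_div exprD !tofracM !tofracXn /= -/t exprD.
by rewrite !mulrA (mulrAC _ (F p)).
Qed.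

Lemma I_le d e x : (e <= d)%N -> I d x -> I e x.
Proof.
move=> hed [n [p ->]]; exists n, (('X - 1) ^+ (d - e) * p).
by rewrite mulrA -exprD subnKC.
Qed.

Lemma I_mul0 d x y : I d x -> I 0 y -> I d (x * y).
Proof. by move=> hx hy; have := I_mul hx hy; rewrite addn0. Qed.

Lemma I_cst c : I 0 (cst c).
Proof. by exists 0%N, c%:P; rewrite expr0 mul1r expr0 divr1. Qed.

Lemma I_t : I 0 t.
Proof. by exists 0%N, 'X; rewrite expr0 mul1r expr0 divr1. Qed.

Lemma I_tinv : I 0 t^-1.
Proof. by exists 1%N, 1; rewrite expr0 mul1r tofrac1 expr1 div1r. Qed.

Lemma I_u d : I d (u ^+ d).
Proof. by exists 0%N, 1; rewrite mulr1 tofracXn FXm1 expr0 divr1. Qed.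

Lemma I_scale d c x : I d x -> I d (cst c * x).
Proof. by move=> h; rewrite mulrC; apply: I_mul0 h (I_cst c). Qed.

Lemma I_opp d x : I d x -> I d (- x).
Proof. by move=> h; rewrite -mulN1r -(rmorphN1 (@cst C)); apply: I_scale. Qed.

Lemma I_sub d x y : I d x -> I d y -> I d (x - y).
Proof. by move=> hx hy; apply: I_add hx (I_opp hy). Qed.

Lemma I_nat d n x : I d x -> I d (n%:R * x).
Proof. by move=> h; rewrite -(rmorph_nat (@cst C)); apply: I_scale. Qed.

Lemma I_sum d (J : Type) (r : seq J) (P : pred J) (G : J -> RF) :
  (forall i, P i -> I d (G i)) -> I d (\sum_(i <- r | P i) G i).
Proof.
move=> h; elim/big_rec: _ => [|i x Pi hx]; first exact: I_0.
exact: I_add (h i Pi) hx.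
Qed.

Lemma ubE : ub = u * (- t^-1).
Proof. by rewrite /ub /u mulrN mulrBl mulfV ?t_neq0 // mul1r opprB. Qed.

Lemma I_ub d : I d (ub ^+ d).
Proof.
rewrite ubE exprMn; apply: I_mul0 (I_u d) _.
elim: d => [|d ih]; first by rewrite expr0 -(rmorph1 (@cst C)); apply: I_cst.
by rewrite exprS; apply: (I_mul0 (I_opp I_tinv) ih).
Qed.

Lemma I_lead d x : I d x -> exists a, I d.+1 (x - cst a * u ^+ d).
Proof.
move=> [n [p ->]]; exists p.[1].
have : root (p - p.[1] *: 'X^n) 1 by rewrite /root hornerD hornerN hornerZ hornerXn expr1n mulr1 subrr.
move=> /factor_theorem [q hq]; exists n, q.
have hq' : ('X - 1) * q = p - p.[1] *: 'X^n by rewrite hq polyC1 mulrC.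
rewrite [in RHS]exprSr -mulrA hq' mulrBr tofracB mulrBl.
congr (_ - _).
rewrite -mul_polyC mulrCA !tofracM -cstE !tofracXn FXm1 -/t mulrA mulfK ?tn_neq0 //.
Qed.

Lemma I_lead0 d a : I d.+1 (cst a * u ^+ d) -> a = 0.
Proof.
move=> [n [p]] h.
have h2 : F (a%:P * ('X - 1) ^+ d * 'X^n) = F (('X - 1) ^+ d.+1 * p).
  by rewrite !tofracM !tofracXn FXm1 -cstE -/t h divfK ?tn_neq0 // tofracM tofracXn FXm1.
move/eqP: h2; rewrite tofrac_eq => /eqP.
have hX : ('X - 1) ^+ d != 0 :> {poly C} by rewrite expf_neq0 // -polyC1 polyXsubC_eq0.
rewrite exprS (mulrC _ (('X - 1) ^+ d)) -mulrA mulrCA -mulrA => /(mulfI hX) /(congr1 (fun q => q.[1])).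
rewrite !hornerM hornerXn expr1n mulr1 hornerC hornerD hornerN hornerX hornerC subrr mul0r.
done.
Qed.

Definition mp (p : {poly C}) : {poly RF} := map_poly (@cst C) p.
Local Notation z := (t^-1).

Lemma mpM p q (w : RF) : (mp (p * q)).[w] = (mp p).[w] * (mp q).[w].
Proof. by rewrite /mp rmorphM hornerM. Qed.
Lemma mpD p q (w : RF) : (mp (p + q)).[w] = (mp p).[w] + (mp q).[w].
Proof. by rewrite /mp rmorphD hornerD. Qed.
Lemma mpB p q (w : RF) : (mp (p - q)).[w] = (mp p).[w] - (mp q).[w].
Proof. by rewrite /mp rmorphB hornerD hornerN. Qed.
Lemma mpX (w : RF) : (mp 'X).[w] = w.
Proof. rewrite /mp. have h := map_polyX (@cst C). by rewrite h hornerX. Qed.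
Lemma mpXn n (w : RF) : (mp ('X ^+ n)).[w] = w ^+ n.
Proof. by rewrite /mp rmorphXn horner_exp -/(mp 'X) mpX. Qed.
Lemma mpXn' n (w : RF) : (mp ('X^n)).[w] = w ^+ n.
Proof. exact: mpXn. Qed.
Lemma mpC c (w : RF) : (mp c%:P).[w] = cst c.
Proof. by rewrite /mp map_polyC hornerC. Qed.
Lemma mp1 (w : RF) : (mp 1).[w] = 1.
Proof. by rewrite /mp rmorph1 hornerC. Qed.
Lemma mpexp p n (w : RF) : (mp (p ^+ n)).[w] = (mp p).[w] ^+ n.
Proof. by rewrite /mp rmorphXn horner_exp. Qed.

Lemma LI_fun x y y' : LI x y -> LI x y' -> y = y'.
Proof.
move=> [n [p [-> ->]]] [m [q [h ->]]].
have h2 : F (p * 'X^m) = F (q * 'X^n).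
  rewrite !tofracM !tofracXn -/t.
  have := congr1 (fun w => w * (t ^+ n * t ^+ m)) h.
  rewrite mulrA mulfVK ?tn_neq0 // (mulrC (t ^+ n)) mulrA mulfVK ?tn_neq0 //.
move/eqP: h2; rewrite tofrac_eq => /eqP /(congr1 (fun r => (mp r).[z])).
rewrite !mpM !mpXn'; apply: fr_cancel; exact: t_neq0.
Qed.

Lemma LI_add x y x' y' : LI x y -> LI x' y' -> LI (x + x') (y + y').
Proof.
move=> [n [p [-> ->]]] [m [q [-> ->]]].
exists (n + m)%N, (p * 'X^m + q * 'X^n); split.
  by rewrite fr_add ?tn_neq0 // tofracD !tofracM !tofracXn -exprD.
by rewrite mpD !mpM !mpXn' fr_add2 // t_neq0.
Qed.

Lemma LI_mul x y x' y' : LI x y -> LI x' y' -> LI (x * x') (y * y').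
Proof.
move=> [n [p [-> ->]]] [m [q [-> ->]]].
exists (n + m)%N, (p * q); split.
  by rewrite mulf_div tofracM exprD.
by rewrite mpM exprD !mulrA (mulrAC _ (t ^+ n)).
Qed.

Lemma LI_cst c : LI (cst c) (cst c).
Proof. by exists 0%N, c%:P; rewrite !expr0 mulr1 divr1 mpC. Qed.

Lemma LI_t : LI t z.
Proof. by exists 0%N, 'X; rewrite !expr0 mulr1 divr1 mpX. Qed.

Lemma LI_tinv : LI z t.
Proof. by exists 1%N, 1; rewrite !expr1 mp1 !mul1r. Qed.

Lemma LI_0 : LI 0 0.
Proof. by rewrite -(rmorph0 (@cst C)); apply: LI_cst. Qed.

Lemma LI_1 : LI 1 1.
Proof. by rewrite -(rmorph1 (@cst C)); apply: LI_cst. Qed.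
Lemma LI_scale c x y : LI x y -> LI (cst c * x) (cst c * y).
Proof. by move=> h; apply: LI_mul (LI_cst c) h. Qed.

Lemma LI_opp x y : LI x y -> LI (- x) (- y).
Proof. by move=> h; rewrite -(mulN1r x) -(mulN1r y) -(rmorphN1 (@cst C)); apply: LI_scale. Qed.

Lemma LI_sub x y x' y' : LI x y -> LI x' y' -> LI (x - x') (y - y').
Proof. by move=> h h'; apply: LI_add h (LI_opp h'). Qed.

Lemma LI_nat k x y : LI x y -> LI (k%:R * x) (k%:R * y).
Proof. by move=> h; rewrite -(rmorph_nat (@cst C)); apply: LI_scale. Qed.

Lemma LI_exp k x y : LI x y -> LI (x ^+ k) (y ^+ k).
Proof.
move=> h; elim: k => [|k ih]; first by rewrite !expr0; exact: LI_1.
by rewrite !exprS; apply: LI_mul.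
Qed.
Lemma LI_sum (J : Type) (r : seq J) (P : pred J) (G G' : J -> RF) :
  (forall i, P i -> LI (G i) (G' i)) ->
  LI (\sum_(i <- r | P i) G i) (\sum_(i <- r | P i) G' i).
Proof.
move=> h; elim/big_rec2: _ => [|i x x' Pi hx]; first exact: LI_0.
exact: LI_add (h i Pi) hx.
Qed.

Lemma LI_u : LI u ub.
Proof. exact: LI_sub LI_t LI_1. Qed.
Lemma LI_ub : LI ub u.
Proof. exact: LI_sub LI_tinv LI_1. Qed.

Lemma LI_poly p : LI (F p) ((mp p).[z]).
Proof. by exists 0%N, p; rewrite !expr0 divr1 mulr1. Qed.
Lemma LI_poly' p : LI ((mp p).[z]) (F p).
Proof.
elim/poly_ind: p => [|p c ih].
  by rewrite /mp rmorph0 horner0 tofrac0; exact: LI_0.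
rewrite mpD mpM mpX mpC tofracD tofracM -cstE.
apply: LI_add (LI_cst c); exact: LI_mul ih LI_tinv.
Qed.

Lemma LI_sym x y : LI x y -> LI y x.
Proof.
move=> [n [p [-> ->]]]; apply: LI_mul (LI_poly' p) _.
rewrite -exprVn; exact: LI_exp LI_t.
Qed.

Lemma LI_I0 x y : LI x y -> I 0 x.
Proof. by move=> [n [p [-> _]]]; exists n, p; rewrite expr0 mul1r. Qed.
Lemma I_tn n : I 0 (t ^+ n).
Proof.
elim: n => [|n ih]; first by rewrite expr0 -(rmorph1 (@cst C)); apply: I_cst.
by rewrite exprS; apply: (@I_mul 0 0) I_t ih.
Qed.

Lemma LI_ideal d x y : LI x y -> I d x -> I d y.
Proof.
move=> hxy [n [p hx]].
have hxy' : LI x ((mp (('X - 1) ^+ d * p)).[z] * t ^+ n).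
  by exists n, (('X - 1) ^+ d * p).
rewrite (LI_fun hxy hxy') mpM mpexp mpB mpX mp1 -/ub.
rewrite -mulrA; apply: I_mul0 (I_ub d) _.
apply: (@I_mul 0 0); first exact: LI_I0 (LI_sym (LI_poly p)).
exact: I_tn.
Qed.
Local Notation loop := (loop C).

Lemma ce_add (v w : loop) : ce (v + w) = ce v + ce w. Proof. by []. Qed.
Lemma cf_add (v w : loop) : cf (v + w) = cf v + cf w. Proof. by []. Qed.
Lemma ch_add (v w : loop) : ch (v + w) = ch v + ch w. Proof. by []. Qed.
Lemma ce_opp (v : loop) : ce (- v) = - ce v. Proof. by []. Qed.
Lemma cf_opp (v : loop) : cf (- v) = - cf v. Proof. by []. Qed.
Lemma ch_opp (v : loop) : ch (- v) = - ch v. Proof. by []. Qed.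
Lemma ce0 : ce (0 : loop) = 0. Proof. by []. Qed.
Lemma cf0 : cf (0 : loop) = 0. Proof. by []. Qed.
Lemma ch0 : ch (0 : loop) = 0. Proof. by []. Qed.
Lemma ce_sub (v w : loop) : ce (v - w) = ce v - ce w. Proof. by []. Qed.
Lemma cf_sub (v w : loop) : cf (v - w) = cf v - cf w. Proof. by []. Qed.
Lemma ch_sub (v w : loop) : ch (v - w) = ch v - ch w. Proof. by []. Qed.

Lemma ce_sum (J : Type) (r : seq J) (P : pred J) (G : J -> loop) :
  ce (\sum_(i <- r | P i) G i) = \sum_(i <- r | P i) ce (G i).
Proof. by apply: (big_morph (@ce C)) => //. Qed.
Lemma cf_sum (J : Type) (r : seq J) (P : pred J) (G : J -> loop) :
  cf (\sum_(i <- r | P i) G i) = \sum_(i <- r | P i) cf (G i).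
Proof. by apply: (big_morph (@cf C)) => //. Qed.
Lemma ch_sum (J : Type) (r : seq J) (P : pred J) (G : J -> loop) :
  ch (\sum_(i <- r | P i) G i) = \sum_(i <- r | P i) ch (G i).
Proof. by apply: (big_morph (@ch C)) => //. Qed.
Lemma LI_eq x y y' : LI x y -> y = y' -> LI x y'.
Proof. by move=> h <-. Qed.

Lemma inOA_add (v w : loop) : inOA v -> inOA w -> inOA (v + w).
Proof.
move=> [h1 h2] [h3 h4]; split; first exact: LI_add.
by rewrite ch_add opprD; apply: LI_add.
Qed.
Lemma inOA_opp (v : loop) : inOA v -> inOA (- v).
Proof. by move=> [h1 h2]; split; apply: LI_opp. Qed.
Lemma inOA_sub (v w : loop) : inOA v -> inOA w -> inOA (v - w).
Proof. by move=> h1 h2; apply: inOA_add h1 (inOA_opp h2). Qed.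
Lemma inOA_0 : inOA (0 : loop).
Proof. by split; rewrite ?ch0 ?oppr0; apply: LI_0. Qed.
Lemma inOA_scale c (v : loop) : inOA v -> inOA (lscale c v).
Proof.
move=> [h1 h2]; split; first exact: LI_scale.
by rewrite /ch /= -mulrN; apply: LI_scale.
Qed.
Lemma inOA_sum (J : Type) (r : seq J) (P : pred J) (G : J -> loop) :
  (forall i, P i -> inOA (G i)) -> inOA (\sum_(i <- r | P i) G i).
Proof.
move=> h; elim/big_rec: _ => [|i x Pi hx]; first exact: inOA_0.
exact: inOA_add (h i Pi) hx.
Qed.

Lemma inOA_lbr (v w : loop) : inOA v -> inOA w -> inOA (lbr v w).
Proof.
move=> [h1 h2] [h3 h4]; split; rewrite /lbr /ce /cf /ch /=.
  apply: LI_eq; first exact: (@LI_nat 2 _ _ (LI_sub (LI_mul h2 h3) (LI_mul h1 h4))).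
  by rewrite mulNr mulrN opprK addrC.
apply: LI_eq; first exact: LI_sub (LI_mul h1 (LI_sym h3)) (LI_mul (LI_sym h1) h3).
by rewrite opprB.
Qed.

Lemma inOA_X k : inOA (Xk C k).
Proof.
split; rewrite /Xk /ce /cf /ch /= -/u -/ub; last by rewrite oppr0; exact: LI_0.
exact: LI_nat (LI_exp k LI_u).
Qed.

Lemma inOA_Y k : inOA (Yk C k).
Proof.
split; rewrite /Yk /ce /cf /ch /= -/u -/ub; first exact: LI_0.
apply: LI_eq; first exact: LI_mul (LI_exp k (LI_opp LI_1)) (LI_sub (LI_exp k LI_u) (LI_exp k LI_ub)).
by rewrite -mulrN opprB.
Qed.

Lemma inOA_adX0 (v : loop) : inOA v -> inOA (adX0 v).
Proof. by move=> h; apply: inOA_lbr (inOA_X 0) h. Qed.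

Lemma inI_add L (v w : loop) : inI L v -> inI L w -> inI L (v + w).
Proof.
by move=> [h1 [h2 h3]] [h4 [h5 h6]]; split; [exact: inOA_add| split; apply: I_add].
Qed.
Lemma inI_opp L (v : loop) : inI L v -> inI L (- v).
Proof. by move=> [h1 [h2 h3]]; split; [exact: inOA_opp| split; apply: I_opp]. Qed.
Lemma inI_sub L (v w : loop) : inI L v -> inI L w -> inI L (v - w).
Proof. by move=> h1 h2; apply: inI_add h1 (inI_opp h2). Qed.
Lemma inI_0 L : inI L (0 : loop).
Proof. by split; [exact: inOA_0 | split; apply: I_0]. Qed.
Lemma inI_scale L c (v : loop) : inI L v -> inI L (lscale c v).
Proof. by move=> [h1 [h2 h3]]; split; [exact: inOA_scale| split; apply: I_scale]. Qed.
Lemma inI_sum L (J : Type) (r : seq J) (P : pred J) (G : J -> loop) :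
  (forall i, P i -> inI L (G i)) -> inI L (\sum_(i <- r | P i) G i).
Proof.
move=> h; elim/big_rec: _ => [|i x Pi hx]; first exact: inI_0.
exact: inI_add (h i Pi) hx.
Qed.

Lemma ce_ad (v : loop) : ce (adX0 v) = - (4%:R * ch v).
Proof. rewrite /adX0 /lbr /Xk /ce /cf /ch /= expr0; ring. Qed.
Lemma cf_ad (v : loop) : cf (adX0 v) = 4%:R * ch v.
Proof. rewrite /adX0 /lbr /Xk /ce /cf /ch /= expr0; ring. Qed.
Lemma ch_ad (v : loop) : ch (adX0 v) = 2%:R * (cf v - ce v).
Proof. rewrite /adX0 /lbr /Xk /ce /cf /ch /= expr0; ring. Qed.
Lemma ce_sc c (v : loop) : ce (lscale c v) = cst c * ce v. Proof. by []. Qed.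
Lemma cf_sc c (v : loop) : cf (lscale c v) = cst c * cf v. Proof. by []. Qed.
Lemma ch_sc c (v : loop) : ch (lscale c v) = cst c * ch v. Proof. by []. Qed.

Lemma loopE (v : loop) : v = ((ce v, cf v), ch v).
Proof. by case: v => [[]]. Qed.

Lemma loop_eq (v w : loop) : ce v = ce w -> cf v = cf w -> ch v = ch w -> v = w.
Proof. by case: v => [[a b] c]; case: w => [[a' b'] c']; rewrite /ce /cf /ch /= => -> -> ->. Qed.

Lemma cst_nat n : cst (n%:R) = n%:R :> RF.
Proof. exact: rmorph_nat. Qed.

Lemma cst_Nnat n : cst (- n%:R) = - n%:R :> RF.
Proof. by rewrite rmorphN /= cst_nat. Qed.

Lemma nat_neq0 n : (n.+1)%:R != 0 :> RF.
Proof.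
by rewrite -cst_nat cstE tofrac_eq0 polyC_eq0 pnatr_eq0.
Qed.

Lemma LI_h : LI (2%:R^-1) (2%:R^-1).
Proof.
have -> : (2%:R^-1 : RF) = cst (2%:R^-1) by rewrite fmorphV /= cst_nat.
exact: LI_cst.
Qed.

Lemma eig_exact L lam (v : loop) : inOA v -> adX0 v = lscale lam v -> eig_mod L lam v.
Proof. by move=> h e; split=> //; rewrite e subrr; apply: inI_0. Qed.

Lemma part1 L (w : loop) : inOA w ->
  exists w0 w4 wm4 : loop,
    [/\ eig_mod L 0 w0, eig_mod L 4 w4, eig_mod L (-4) wm4 & inI L (w - (w0 + w4 + wm4))].
Proof.
case: w => [[a b] c] [hab hc]; rewrite /ce /cf /ch /= in hab hc.
have [h [Hh h2]] : exists h : RF, LI h h /\ h * 2%:R = 1.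
  by exists 2%:R^-1; split; [exact: LI_h | rewrite mulVf ?nat_neq0].
set s := h * (a + b).
set cm := h * (c + h * (a - b)).
set c4 := h * (c - h * (a - b)).
have hba := LI_sym hab.
have hc' : LI (- c) c by rewrite -{2}(opprK c); apply: LI_opp.
exists ((s, s), 0), ((- c4, c4), c4), ((cm, - cm), cm); split.
- apply: eig_exact.
    split; rewrite /ce /cf /ch /= ?oppr0; last exact: LI_0.
    by apply: LI_mul Hh _; rewrite [X in LI _ X]addrC; apply: LI_add.
  apply: loop_eq; rewrite ?ce_ad ?cf_ad ?ch_ad /lscale /ce /cf /ch /= rmorph0; ring.
- apply: eig_exact.
    split; rewrite /ce /cf /ch /=.
      apply: LI_eq; first exact: (LI_opp (LI_mul Hh (LI_sub hc (LI_mul Hh (LI_sub hab hba))))).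
      by rewrite /c4; ring.
    apply: LI_eq; first exact: ((LI_mul Hh (LI_sub hc (LI_mul Hh (LI_sub hab hba))))).
    by rewrite /c4; ring.
  apply: loop_eq; rewrite ?ce_ad ?cf_ad ?ch_ad /lscale /ce /cf /ch /= cst_nat; ring.
- apply: eig_exact.
    split; rewrite /ce /cf /ch /=.
      apply: LI_eq; first exact: ((LI_mul Hh (LI_add hc (LI_mul Hh (LI_sub hab hba))))).
      by rewrite /cm; ring.
    apply: LI_eq; first exact: ((LI_mul Hh (LI_add hc (LI_mul Hh (LI_sub hab hba))))).
    by rewrite /cm; ring.
  apply: loop_eq; rewrite ?ce_ad ?cf_ad ?ch_ad /lscale /ce /cf /ch /= cst_Nnat; ring.
- have -> : ((a, b), c) - (((s, s), 0) + ((- c4, c4), c4) + ((cm, - cm), cm)) = 0.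
    apply: loop_eq; rewrite /ce /cf /ch /= /s /c4 /cm.
    + transitivity ((1 - h * 2%:R) * (a + h * a - h * b)); first ring.
      by rewrite h2 subrr mul0r.
    + transitivity ((1 - h * 2%:R) * (b + h * b - h * a)); first ring.
      by rewrite h2 subrr mul0r.
    + transitivity ((1 - h * 2%:R) * c); first ring.
      by rewrite h2 subrr mul0r.
  exact: inI_0.
Qed.
Lemma cst_mul (c d : C) : cst c * cst d = cst (c * d).
Proof. by rewrite rmorphM. Qed.

Lemma I_unscale L k x : k != 0 -> I L (cst k * x) -> I L x.
Proof.
move=> hk h; have -> : x = cst k^-1 * (cst k * x).
  by rewrite mulrA cst_mul mulVf // rmorph1 mul1r.
exact: I_scale.
Qed.

Lemma eig_parts L mu (w : loop) : eig_mod L mu w ->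
  [/\ I L (- (4%:R * ch w) - cst mu * ce w),
      I L (4%:R * ch w - cst mu * cf w) &
      I L (2%:R * (cf w - ce w) - cst mu * ch w)].
Proof.
move=> [hw [[hD _] [hD2 hD3]]].
rewrite ce_sub ce_ad ce_sc in hD2 hD.
rewrite cf_sub cf_ad cf_sc in hD.
rewrite ch_sub ch_ad ch_sc in hD3.
split=> //; exact: LI_ideal hD hD2.
Qed.

Lemma part2 L (mu : C) (w : loop) : inOA w -> ~ inI L w ->
  eig_mod L mu w -> mu = 0 \/ mu = 4 \/ mu = -4.
Proof.
move=> hw hnw he; have [E1 E2 E3] := eig_parts he.
case: (eqVneq mu 0) => [->|h0]; first by left.
case: (eqVneq mu 4) => [->|h4]; first by right; left.
case: (eqVneq mu (-4)) => [->|hm4]; first by right; right.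
exfalso; apply: hnw; split=> //.
have hk : 16%:R - mu * mu != 0.
  have -> : 16%:R - mu * mu = (4%:R - mu) * (4%:R + mu) by ring.
  apply: mulf_neq0; first by rewrite subr_eq0 eq_sym.
  by rewrite addrC addr_eq0.
have hc : I L (ch w).
  apply: (I_unscale hk).
  have -> : cst (16%:R - mu * mu) * ch w =
     cst mu * (2%:R * (cf w - ce w) - cst mu * ch w)
     + 2%:R * (4%:R * ch w - cst mu * cf w) - 2%:R * (- (4%:R * ch w) - cst mu * ce w).
    rewrite rmorphB /= -cst_mul cst_nat; ring.
  apply: I_sub; first apply: I_add; first exact: I_scale.
    exact: I_nat.
  exact: I_nat.
split=> //.
apply: (I_unscale h0).
have -> : cst mu * ce w = - (- (4%:R * ch w) - cst mu * ce w) - 4%:R * ch w by ring.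
by apply: I_sub; [apply: I_opp | apply: I_nat].
Qed.
Lemma eig0_parts L (w : loop) : eig_mod L 0 w ->
  inOA w /\ I L (ch w) /\ I L (cf w - ce w).
Proof.
move=> he; have [E1 E2 E3] := eig_parts he.
have [hw _] := he; split=> //.
rewrite rmorph0 !mul0r !subr0 in E1 E3; split.
  apply: (I_unscale (k := - 4%:R)); first by rewrite oppr_eq0 pnatr_eq0.
  by rewrite cst_Nnat mulNr.
rewrite -cst_nat in E3; apply: (I_unscale (k := 2%:R)) => //; by rewrite pnatr_eq0.
Qed.

Lemma part4 L (w1 w2 : loop) : eig_mod L 0 w1 -> eig_mod L 0 w2 -> inI L (lbr w1 w2).
Proof.
move=> /eig0_parts [h1 [c1 d1]] /eig0_parts [h2 [c2 d2]].
split; first exact: inOA_lbr.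
have a1 := LI_I0 h1.1; have a2 := LI_I0 h2.1.
split; rewrite /lbr /ce /cf /ch /= -/(ce w1) -/(ce w2) -/(cf w1) -/(cf w2) -/(ch w1) -/(ch w2).
  apply: I_nat; apply: I_sub; first exact: I_mul0.
  by rewrite mulrC; apply: I_mul0.
have -> : ce w1 * cf w2 - cf w1 * ce w2 =
   ce w1 * (cf w2 - ce w2) - ce w2 * (cf w1 - ce w1) by ring.
by apply: I_sub; rewrite mulrC; apply: I_mul0.
Qed.
Lemma cst_coef n c : cst ((-1) ^+ n * c%:R) = (-1) ^+ n * c%:R :> RF.
Proof. by rewrite -cst_mul rmorphXn rmorphN1 /= cst_nat. Qed.

Definition Tz (w : RF) (m N : nat) : RF :=
  \sum_(0 <= k < N) cst ((-1) ^+ k.+1 * ('C(k, m))%:R) * w ^+ k.+1.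

Lemma Tz_recr w m N : Tz w m N.+1 = Tz w m N + cst ((-1) ^+ N.+1 * ('C(N, m))%:R) * w ^+ N.+1.
Proof. by rewrite /Tz big_nat_recr. Qed.

Lemma Tz_step w m N :
  (1 + w) * Tz w m.+1 N + w * Tz w m N = - (cst ((-1) ^+ N.+1 * ('C(N, m.+1))%:R) * w ^+ N.+1).
Proof.
have h1 := Tz_recr w m.+1 N.
have h2 : Tz w m.+1 N.+1 = - (w * Tz w m.+1 N + w * Tz w m N).
  rewrite /Tz big_nat_recl // bin0n mulr0 rmorph0 mul0r add0r.
  rewrite !mulr_sumr -big_split /= -sumrN; apply: eq_bigr => k _.
  rewrite !cst_coef binS natrD !exprS; ring.
move: h1; rewrite h2 => h1.
have -> : (1 + w) * Tz w m.+1 N + w * Tz w m N =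
    - (- (w * Tz w m.+1 N + w * Tz w m N)) + Tz w m.+1 N by ring.
rewrite h1; ring.
Qed.

Lemma Tz_step0 w N :
  (1 + w) * Tz w 0 N + w = - (cst ((-1) ^+ N.+1 * ('C(N, 0))%:R) * w ^+ N.+1).
Proof.
have h1 := Tz_recr w 0 N.
have h2 : Tz w 0 N.+1 = - w - w * Tz w 0 N.
  rewrite /Tz big_nat_recl // bin0 expr1 mulr1 rmorphN1 mulN1r.
  rewrite mulr_sumr -sumrN; congr (_ + _); apply: eq_bigr => k _.
  rewrite !cst_coef !bin0 !exprS; ring.
move: h1; rewrite h2 => h1.
have -> : (1 + w) * Tz w 0 N + w = - (- w - w * Tz w 0 N) + Tz w 0 N by ring.
rewrite h1; ring.
Qed.
Lemma T_approx (w wb wi : RF) : I 0 wi -> (1 + w) * wi = 1 -> wb = - (w * wi) ->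
  (forall k, I k (w ^+ k)) -> forall m N, I N.+1 (Tz w m N - wb ^+ m.+1).
Proof.
move=> hwi h1 hwb hk; elim=> [|m ih] N.
  have -> : Tz w 0 N - wb ^+ 1 = wi * ((1 + w) * Tz w 0 N + w) - Tz w 0 N * ((1 + w) * wi - 1).
    by rewrite hwb; ring.
  rewrite h1 subrr mulr0 subr0 Tz_step0 mulrC; apply: I_mul0 hwi.
  by apply: I_opp; apply: I_scale.
have -> : Tz w m.+1 N - wb ^+ m.+2 = wi * ((1 + w) * Tz w m.+1 N + w * Tz w m N)
   - Tz w m.+1 N * ((1 + w) * wi - 1) + wb * (Tz w m N - wb ^+ m.+1).
  by rewrite [wb ^+ m.+2]exprS hwb; ring.
rewrite h1 subrr mulr0 subr0 Tz_step; apply: I_add.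
  rewrite mulrC; apply: I_mul0 hwi.
  by apply: I_opp; apply: I_scale.
by rewrite mulrC; apply: I_mul0 (ih N) _; rewrite hwb; apply: I_opp; apply: (@I_mul 0 0) => //; have := hk 1%N; rewrite expr1; apply: I_le.
Qed.

Lemma T_u m N : I N.+1 (Tz u m N - ub ^+ m.+1).
Proof.
apply: (T_approx (wi := t^-1)); first exact: I_tinv.
- by rewrite /u addrC subrK mulfV // t_neq0.
- by rewrite ubE mulrN.
- exact: I_u.
Qed.

Lemma T_ub m N : I N.+1 (Tz ub m N - u ^+ m.+1).
Proof.
apply: (T_approx (wi := t)); first exact: I_t.
- by rewrite /ub addrC subrK mulVf // t_neq0.
- by rewrite /ub /u mulrBl mulVf ?t_neq0 // mul1r opprB.
- exact: I_ub.
Qed.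
End S.

Arguments t_neq0 {C}.
Arguments tn_neq0 {C}.
Arguments u {C}.
Arguments ub {C}.
Arguments FXm1 {C}.
Arguments I_0 {C}.
Arguments I_t {C}.
Arguments I_tinv {C}.
Arguments I_u {C}.
Arguments ubE {C}.
Arguments I_ub {C}.
Arguments LI_t {C}.
Arguments LI_tinv {C}.
Arguments LI_0 {C}.
Arguments LI_1 {C}.
Arguments LI_u {C}.
Arguments LI_ub {C}.
Arguments I_tn {C}.
Arguments ce0 {C}.
Arguments cf0 {C}.
Arguments ch0 {C}.
Arguments inOA_0 {C}.
Arguments inOA_X {C}.
Arguments inOA_Y {C}.
Arguments inI_0 {C}.
Arguments cst_nat {C}.
Arguments cst_Nnat {C}.
Arguments nat_neq0 {C}.
Arguments LI_h {C}.
Arguments cst_coef {C}.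
Arguments T_u {C}.
Arguments T_ub {C}.

Section S2.
Variable C : numClosedFieldType.
Local Notation RF := (RF C).
Local Notation F := (@FracField.tofrac {poly C}).
Local Notation t := (tt C).
Local Notation I := (@in_tm1_ideal C).
Local Notation LI := (@laurent_inv C).
Local Notation loop := (loop C).
Local Notation u := (@u C).
Local Notation ub := (@ub C).

Definition coef (m k : nat) : C := (-1) ^+ k * ('C(k - 1, m))%:R.

Lemma S_T (w : RF) m L : (m < L)%N ->
  \sum_(m.+1 <= k < L) cst (coef m k) * w ^+ k = Tz w m L.-1.
Proof.
move=> hmL.
have h0 : \sum_(1 <= k < m.+1) cst (coef m k) * w ^+ k = 0.
  rewrite big_nat big1 // => k /andP [hk1 hk2].
  have hk : (k - 1 < m)%N by case: k hk1 hk2 => // k _; rewrite subSS subn0.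
  by rewrite /coef bin_small ?mulr0 ?rmorph0 ?mul0r.
transitivity (\sum_(1 <= k < L) cst (coef m k) * w ^+ k).
  by rewrite [RHS](big_cat_nat _ (n := m.+1)) //= h0 add0r.
rewrite big_add1 /Tz; apply: eq_bigr => k _.
by rewrite /coef subSS subn0.
Qed.

Lemma ub_u d : I d.+1 (ub ^+ d - (-1) ^+ d * u ^+ d).
Proof.
have -> : ub ^+ d - (-1) ^+ d * u ^+ d = (-1) ^+ d * u ^+ d * (t^-1 ^+ d - 1).
  by rewrite ubE exprMn [(- t^-1) ^+ d]exprNn; ring.
rewrite subrX1 -/ub.
set S := \sum_(i < d) _.
have -> : (-1) ^+ d * u ^+ d * (ub * S) = (ub * u ^+ d) * ((-1) ^+ d * S) by ring.
apply: I_mul0; first by rewrite -add1n; apply: I_mul; [rewrite -[ub]expr1; apply: I_ub | apply: I_u].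
apply: I_mul0; first exact: (LI_I0 (LI_exp d (LI_opp LI_1))).
rewrite /S; apply: I_sum => i _; exact: (LI_I0 (LI_exp i LI_tinv)).
Qed.
Lemma ce_X k : ce (Xk C k) = 2%:R * u ^+ k. Proof. by []. Qed.
Lemma cf_X k : cf (Xk C k) = 2%:R * ub ^+ k. Proof. by []. Qed.
Lemma ch_X k : ch (Xk C k) = 0. Proof. by []. Qed.
Lemma ce_Y k : ce (Yk C k) = 0. Proof. by []. Qed.
Lemma cf_Y k : cf (Yk C k) = 0. Proof. by []. Qed.
Lemma ch_Y k : ch (Yk C k) = (-1) ^+ k * (u ^+ k - ub ^+ k). Proof. by []. Qed.

Lemma sum2_T (w : RF) m L : (m < L)%N ->
  \sum_(m.+1 <= k < L) cst (coef m k) * (2%:R * w ^+ k) = 2%:R * Tz w m L.-1.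
Proof.
move=> h; rewrite -S_T // mulr_sumr; apply: eq_bigr => k _; ring.
Qed.

Lemma sum2_T2 (w : RF) m L : (m.+1 < L)%N -> ~~ odd m ->
  \sum_(m.+2 <= k < L) cst (coef m k) * (2%:R * w ^+ k) = 2%:R * (Tz w m L.-1 + w ^+ m.+1).
Proof.
move=> h hm; rewrite mulrDr -sum2_T 1?ltnW // [in RHS]big_ltn //.
have hc : cst (coef m m.+1) = -1 :> RF.
  rewrite /coef subSS subn0 binn mulr1 exprS -signr_odd (negPf hm) expr0 mulr1.
  by rewrite rmorphN1.
rewrite hc; ring.
Qed.
Lemma B0_ce_S l i (hi : (i.+1 < l)%N) :
  ce (B0 C l (Ordinal hi)) = 2%:R * (Tz u (2 * i) (2 * l).-1 + u ^+ (2 * i).+1)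
  /\ cf (B0 C l (Ordinal hi)) = 2%:R * (Tz ub (2 * i) (2 * l).-1 + ub ^+ (2 * i).+1)
  /\ ch (B0 C l (Ordinal hi)) = 0
  /\ ce (B0 C l (Ordinal hi)) = \sum_((2 * i).+2 <= k < 2 * l) cst (coef (2 * i) k) * (2%:R * u ^+ k).
Proof.
rewrite /B0 /=.
have e1 : (2 * i.+2 - 2 = (2 * i).+2)%N by lia.
have e2 : (2 * i.+2 - 4 = 2 * i)%N by lia.
rewrite e1 e2 ce_sum cf_sum ch_sum.
have hm : ~~ odd (2 * i) by rewrite oddM.
have hl : ((2 * i).+1 < 2 * l)%N by lia.
split; last split; last split.
- rewrite -sum2_T2 //; apply: eq_bigr => k _; by rewrite ce_sc ce_X.
- rewrite -sum2_T2 //; apply: eq_bigr => k _; by rewrite cf_sc cf_X.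
- by rewrite big1 // => k _; rewrite ch_sc ch_X mulr0.
- by apply: eq_bigr => k _; rewrite ce_sc ce_X.
Qed.
Lemma Bpm_comp l s i (hi : (i < l)%N) :
  ce (Bpm C l s (Ordinal hi)) = cst s * (2%:R * u ^+ (2 * i).+1 - 2%:R * Tz u (2 * i) (2 * l).-1)
  /\ cf (Bpm C l s (Ordinal hi)) = cst s * (2%:R * ub ^+ (2 * i).+1 - 2%:R * Tz ub (2 * i) (2 * l).-1)
  /\ ch (Bpm C l s (Ordinal hi)) = - (2%:R * (u ^+ (2 * i).+1 - ub ^+ (2 * i).+1)).
Proof.
rewrite /Bpm.
have e1 : (2 * i.+1 - 1 = (2 * i).+1)%N by lia.
have e2 : (2 * i.+1 - 2 = 2 * i)%N by lia.
have hl : (2 * i < 2 * l)%N by lia.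
rewrite e1 e2 ce_add cf_add ch_add !ce_sc !cf_sc !ch_sc ce_sub cf_sub ch_sub.
rewrite ce_sum cf_sum ch_sum ce_Y cf_Y ch_Y ce_X cf_X ch_X mulr0 add0r.
split; last split.
- by rewrite -sum2_T //; congr (_ * (_ - _)); apply: eq_bigr => k _; rewrite ce_sc ce_X.
- by rewrite add0r -sum2_T //; congr (_ * (_ - _)); apply: eq_bigr => k _; rewrite cf_sc cf_X.
- rewrite big1 ?subr0 ?mulr0 ?addr0; last by move=> k _; rewrite ch_sc ch_X mulr0.
  by rewrite cst_nat exprS -signr_odd oddM /= expr0 mulr1; ring.
Qed.
Lemma sum_delta l (i : nat) (hi : (i < l)%N) (X : RF) :
  \sum_(j < l) (if (j : nat) == i then X else 0) = X.
Proof.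
rewrite (bigD1 (Ordinal hi)) //= eqxx big1 ?addr0 // => j hj.
case: eqP => // hji; case/negP: hj; apply/eqP/val_inj => /=; exact: hji.
Qed.

Lemma sign_par (d : nat) (par : bool) : odd d != par ->
  (-1) ^+ d = - ((-1) ^+ par) :> RF.
Proof.
by rewrite -signr_odd; case: (odd d); case: par => //= _; rewrite ?opprK ?expr0 ?expr1.
Qed.

Lemma cst_neq0 (c : C) : c != 0 -> cst c != 0 :> RF.
Proof. by move=> h; rewrite cstE tofrac_eq0 polyC_eq0. Qed.

Lemma peel (l : nat) (par : bool) (e f : nat -> RF) (ka : nat -> C) :
  (forall i, (i < l)%N -> [/\ LI (e i) (f i), I (2 * l) (f i - (-1) ^+ par * e i),
     I (2 * i + par) (e i), ka i != 0 &
     I (2 * i + par).+1 (e i - cst (ka i) * u ^+ (2 * i + par))]) ->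
  forall k x y, LI x y -> I (2 * l) (y - (-1) ^+ par * x) -> I (2 * l - k) x ->
  exists c : nat -> C, I (2 * l) (x - \sum_(j < l) cst (c j) * e j).
Proof.
move=> H; elim=> [|k IH] x y hxy hyx hx.
  exists (fun _ => 0); rewrite big1 => [|j _]; last by rewrite rmorph0 mul0r.
  by rewrite subr0; rewrite subn0 in hx.
case: (leqP (2 * l) k) => hk.
  apply: IH hxy hyx _.
  by have -> : (2 * l - k = 2 * l - k.+1)%N by lia.
set d := (2 * l - k.+1)%N.
have hd : (2 * l - k = d.+1)%N by rewrite /d; lia.
rewrite hd in IH; have [a ha] := I_lead hx.
case hpar: (odd d == par).
-
  set i := d./2.
  have hdi : d = (2 * i + par)%N.
    by rewrite /i -(eqP hpar) addnC mul2n odd_double_half.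
  have hil : (i < l)%N.
    have hp1 : (par <= 1)%N by case: (par).
    move: hdi hk hp1; rewrite /d; lia.
  have [hef hfe hei hka hlead] := H i hil.
  set b := a / ka i.
  have hyx2 : I (2 * l) (y - cst b * f i - (-1) ^+ par * (x - cst b * e i)).
    have -> : y - cst b * f i - (-1) ^+ par * (x - cst b * e i) =
       (y - (-1) ^+ par * x) - cst b * (f i - (-1) ^+ par * e i) by ring.
    by apply: I_sub hyx (I_scale b hfe).
  have hx2 : I d.+1 (x - cst b * e i).
    have -> : x - cst b * e i = (x - cst a * u ^+ d) - cst b * (e i - cst (ka i) * u ^+ d).
      have hb : cst b * cst (ka i) = cst a :> RF by rewrite cst_mul /b mulfVK.
      by rewrite -hb; ring.
    by apply: I_sub => //; apply: I_scale; rewrite hdi.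
  have [c' hc'] := IH _ _ (LI_sub hxy (LI_scale b hef)) hyx2 hx2.
  exists (fun j => c' j + (if j == i then b else 0)).
  have -> : \sum_(j < l) cst (c' j + (if (j : nat) == i then b else 0)) * e j =
     \sum_(j < l) cst (c' j) * e j + cst b * e i.
    rewrite -(sum_delta hil (cst b * e i)) -big_split /=; apply: eq_bigr => j _.
    by case: eqP => [->|_]; rewrite ?rmorphD /= ?mulrDl // rmorph0 addr0 mul0r addr0.
  set S' := \sum_(j < l) _.
  by have -> : x - (S' + cst b * e i) = x - cst b * e i - S' by ring.
-
  have ha0 : a = 0.
    have hsg := sign_par (negbT hpar).
    set x1 := x - cst a * u ^+ d.
    set y1 := y - cst a * ub ^+ d.
    have hxy1 : LI x1 y1 by apply: LI_sub hxy (LI_scale a (LI_exp d LI_u)).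
    have hy1 : I d.+1 y1 := LI_ideal hxy1 ha.
    have hyx' : I d.+1 (y - (-1) ^+ par * x) by apply: I_le hyx; rewrite /d; lia.
    have e1 : cst (- 2%:R * a) * u ^+ d = (-1) ^+ par * ((y - (-1) ^+ par * x) - (y1 - (-1) ^+ par * x1)
         - cst a * (ub ^+ d - (-1) ^+ d * u ^+ d)).
      rewrite hsg /x1 /y1 -cst_mul cst_Nnat.
      have hp : ((-1) ^+ par * (-1) ^+ par = 1 :> RF) by rewrite -expr2 sqrr_sign.
      transitivity (- 2%:R * ((-1) ^+ par * (-1) ^+ par) * cst a * u ^+ d); first by rewrite hp; ring.
      ring.
    have : I d.+1 (cst (- 2%:R * a) * u ^+ d).
      rewrite e1 mulrC; apply: I_mul0; last exact: LI_I0 (LI_exp par (LI_opp LI_1)).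
      apply: I_sub; last by apply: I_scale; apply: ub_u.
      apply: I_sub hyx' _; apply: I_sub hy1 _.
      by rewrite mulrC; apply: I_mul0 ha (LI_I0 (LI_exp par (LI_opp LI_1))).
    move/I_lead0/eqP; rewrite mulf_eq0 oppr_eq0 pnatr_eq0 /= => /eqP //.
  apply: IH hxy hyx _.
  by move: ha; rewrite ha0 rmorph0 mul0r subr0.
Qed.

Lemma indep (l : nat) (par : bool) (e : nat -> RF) (ka : nat -> C) :
  (forall i, (i < l)%N -> [/\ I (2 * i + par) (e i), ka i != 0 &
     I (2 * i + par).+1 (e i - cst (ka i) * u ^+ (2 * i + par))]) ->
  forall c : 'I_l -> C, I (2 * l) (\sum_(j < l) cst (c j) * e j) -> forall j, c j = 0.
Proof.
move=> H c hs.
suff : forall n (j : 'I_l), (j < n)%N -> c j = 0 by move=> h j; apply: (h j.+1).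
elim=> [//|n IH] j hj.
case: (ltnP j n) => hjn; first exact: IH.
have ejn : nat_of_ord j = n by apply/eqP; rewrite eqn_leq hjn -ltnS hj.
set D := (2 * j + par)%N.
have [hei hka hlead] := H j (ltn_ord j).
have hsD : I D.+1 (\sum_(j' < l) cst (c j') * e j' - cst (c j * ka j) * u ^+ D).
  rewrite -(sum_delta (ltn_ord j) (cst (c j * ka j) * u ^+ D)) -sumrB.
  apply: I_sum => j' _.
  case: (ltngtP j' j) => hj'.
  - rewrite (IH j') ?rmorph0 ?mul0r ?subr0; first exact: I_0.
    by rewrite -ejn.
  -
    rewrite subr0; apply: I_scale.
    have [hej _ _] := H j' (ltn_ord j').
    by apply: I_le hej; rewrite /D; lia.
  - have -> : j' = j by apply: val_inj.
    rewrite -cst_mul -mulrA -mulrBr; apply: I_scale.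
    exact: hlead.
have : I D.+1 (cst (c j * ka j) * u ^+ D).
  have -> : cst (c j * ka j) * u ^+ D =
     \sum_(j' < l) cst (c j') * e j' - (\sum_(j' < l) cst (c j') * e j' - cst (c j * ka j) * u ^+ D)
    by ring.
  apply: I_sub hsD; apply: I_le hs.
  have hp1 : (par <= 1)%N by case: (par).
  have := ltn_ord j; rewrite /D; lia.
by move/I_lead0/eqP; rewrite mulf_eq0 (negPf hka) orbF => /eqP.
Qed.
Lemma sum_lead (c : nat -> C) lo L : (lo < L)%N ->
  I lo (\sum_(lo <= k < L) cst (c k) * (2%:R * u ^+ k)) /\
  I lo.+1 (\sum_(lo <= k < L) cst (c k) * (2%:R * u ^+ k) - cst (c lo * 2%:R) * u ^+ lo).
Proof.
move=> h.
have hr : I lo.+1 (\sum_(lo.+1 <= k < L) cst (c k) * (2%:R * u ^+ k)).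
  rewrite big_nat; apply: I_sum => k /andP [hk _]; apply: I_scale; apply: I_nat.
  exact: I_le (I_u k).
rewrite big_ltn //; split.
  apply: I_add; last exact: I_le hr.
  by apply: I_scale; apply: I_nat; apply: I_u.
have -> : cst (c lo) * (2%:R * u ^+ lo) + \sum_(lo.+1 <= k < L) cst (c k) * (2%:R * u ^+ k)
    - cst (c lo * 2%:R) * u ^+ lo = \sum_(lo.+1 <= k < L) cst (c k) * (2%:R * u ^+ k).
  by rewrite -cst_mul cst_nat; ring.
exact: hr.
Qed.

Lemma LI_I0' x y : LI x y -> I 0 y.
Proof. by move=> h; apply: LI_I0 (LI_sym h). Qed.
Lemma inOA_B0 l (i : 'I_l) : inOA (B0 C l i).
Proof.
rewrite /B0; case: ifP => _; first exact: inOA_X.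
by apply: inOA_sum => k _; apply: inOA_scale; apply: inOA_X.
Qed.

Lemma inOA_Bpm l s (i : 'I_l) : inOA (Bpm C l s i).
Proof.
rewrite /Bpm; apply: inOA_add; first by apply: inOA_scale; apply: inOA_Y.
apply: inOA_scale; apply: inOA_sub; first exact: inOA_X.
by apply: inOA_sum => k _; apply: inOA_scale; apply: inOA_X.
Qed.

Definition ka0 (i : nat) : C := if i is i'.+1 then coef (2 * i') (2 * i').+2 * 2%:R else 2%:R.

Lemma ka0_neq0 i : ka0 i != 0.
Proof.
case: i => [|i] /=; first by rewrite pnatr_eq0.
rewrite /coef mulf_neq0 ?pnatr_eq0 // mulf_neq0 ?signr_eq0 //.
by rewrite subSS subn0 binSn pnatr_eq0.
Qed.

Lemma B0_facts n i (hi : (i < n.+1)%N) :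
  [/\ ch (B0 C n.+1 (inord i)) = 0, I (2 * n.+1) (cf (B0 C n.+1 (inord i)) - ce (B0 C n.+1 (inord i))), I (2 * i) (ce (B0 C n.+1 (inord i)))
    & I (2 * i).+1 (ce (B0 C n.+1 (inord i)) - cst (ka0 i) * u ^+ (2 * i))].
Proof.
case: i hi => [|i] hi.
  have -> : B0 C n.+1 (inord 0) = Xk C 0 by rewrite /B0 inordK.
  rewrite ch_X cf_X ce_X !expr0 subrr cst_nat subrr; split => //; try exact: I_0.
  by rewrite -(expr0 u); apply: I_nat; apply: I_u.
have -> : inord i.+1 = Ordinal hi :> 'I_n.+1 by apply: val_inj; rewrite /= inordK.
have [hce [hcf [hch hce2]]] := B0_ce_S hi.
have hL : ((2 * n.+1).-1.+1 = 2 * n.+1)%N by lia.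
have e2 : (2 * i.+1 = (2 * i).+2)%N by lia.
split => //.
- rewrite hcf hce.
  have -> : 2%:R * (Tz ub (2 * i) (2 * n.+1).-1 + ub ^+ (2 * i).+1) -
     2%:R * (Tz u (2 * i) (2 * n.+1).-1 + u ^+ (2 * i).+1) =
     2%:R * ((Tz ub (2 * i) (2 * n.+1).-1 - u ^+ (2 * i).+1) -
             (Tz u (2 * i) (2 * n.+1).-1 - ub ^+ (2 * i).+1)) by ring.
  by apply: I_nat; rewrite -{1}hL; apply: I_sub; [apply: T_ub | rewrite -{2}hL; apply: T_u].
- rewrite hce2 e2; apply: (proj1 (sum_lead _ _)); lia.
- rewrite hce2 e2; apply: (proj2 (sum_lead _ _)); lia.
Qed.
Lemma Bpm_facts n (s : C) (hs : s * s = 1) i (hi : (i < n.+1)%N) :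
  [/\ I (2 * n.+1) (- (4%:R * ch (Bpm C n.+1 s (inord i))) - cst (4%:R * s) * ce (Bpm C n.+1 s (inord i))),
      I (2 * n.+1) (2%:R * (cf (Bpm C n.+1 s (inord i)) - ce (Bpm C n.+1 s (inord i))) - cst (4%:R * s) * ch (Bpm C n.+1 s (inord i))),
      I (2 * i + true) (ch (Bpm C n.+1 s (inord i)))
    & I (2 * i + true).+1 (ch (Bpm C n.+1 s (inord i)) - cst (- 4%:R) * u ^+ (2 * i + true))].
Proof.
have -> : inord i = Ordinal hi :> 'I_n.+1 by apply: val_inj; rewrite /= inordK.
have [hce [hcf hch]] := Bpm_comp s hi.
have hL : ((2 * n.+1).-1.+1 = 2 * n.+1)%N by lia.
have e1 : (2 * i + true = (2 * i).+1)%N by rewrite addn1.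
rewrite e1 hce hcf hch.
have hcs : cst s * cst s = 1 :> RF by rewrite cst_mul hs rmorph1.
set Tu := Tz u (2 * i) (2 * n.+1).-1.
set Tb := Tz ub (2 * i) (2 * n.+1).-1.
set N := (2 * i).+1.
split.
- have -> : - (4%:R * - (2%:R * (u ^+ N - ub ^+ N))) - cst (4%:R * s) * (cst s * (2%:R * u ^+ N - 2%:R * Tu))
     = 8%:R * (Tu - ub ^+ N) + 4%:R * (1 - cst s * cst s) * (2%:R * u ^+ N - 2%:R * Tu).
    by rewrite -cst_mul cst_nat; ring.
  rewrite hcs subrr mulr0 mul0r addr0; apply: I_nat.
  by rewrite -hL; apply: T_u.
- have -> : 2%:R * (cst s * (2%:R * ub ^+ N - 2%:R * Tb) - cst s * (2%:R * u ^+ N - 2%:R * Tu)) -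
     cst (4%:R * s) * - (2%:R * (u ^+ N - ub ^+ N)) =
     cst s * (4%:R * ((Tu - ub ^+ N) - (Tb - u ^+ N))).
    by rewrite -cst_mul cst_nat; ring.
  apply: I_scale; apply: I_nat; rewrite -hL; apply: I_sub; [apply: T_u | apply: T_ub].
- by apply: I_opp; apply: I_nat; apply: I_sub; [apply: I_u | apply: I_ub].
- have hsg : (-1) ^+ N = -1 :> RF.
    by rewrite /N exprS -signr_odd oddM /= expr0 mulr1.
  have -> : - (2%:R * (u ^+ N - ub ^+ N)) - cst (- 4%:R) * u ^+ N =
     2%:R * (ub ^+ N - (-1) ^+ N * u ^+ N).
    by rewrite hsg cst_Nnat; ring.
  by apply: I_nat; apply: ub_u.
Qed.
Lemma inI_parts L (v : loop) : inOA v -> I L (ce v) -> I L (ch v) -> inI L v.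
Proof. by move=> h1 h2 h3; split => //; split. Qed.

Lemma basis0 n : eigenbasis_mod (2 * n.+1) 0 (B0 C n.+1).
Proof.
have F i : [/\ ch (B0 C n.+1 i) = 0, I (2 * n.+1) (cf (B0 C n.+1 i) - ce (B0 C n.+1 i)),
    I (2 * i) (ce (B0 C n.+1 i)) & I (2 * i).+1 (ce (B0 C n.+1 i) - cst (ka0 i) * u ^+ (2 * i))].
  by have := B0_facts (ltn_ord i); rewrite inord_val.
split.
- move=> i; have [hch hcfe _ _] := F i; split; first exact: inOA_B0.
  apply: inI_parts.
  + by apply: inOA_sub; [apply: inOA_adX0; apply: inOA_B0 | apply: inOA_scale; apply: inOA_B0].
  + by rewrite ce_sub ce_ad ce_sc hch mulr0 oppr0 rmorph0 mul0r subr0; apply: I_0.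
  + by rewrite ch_sub ch_ad ch_sc rmorph0 mul0r subr0; apply: I_nat.
- move=> c [_ [hce _]] i.
  rewrite ce_sum in hce.
  apply: (@indep n.+1 false (fun j => ce (B0 C n.+1 (inord j))) ka0) => [j hj|].
    have [_ _ h1 h2] := B0_facts hj; rewrite addn0; split => //; exact: ka0_neq0.
  move: hce; congr (I _ _); apply: eq_bigr => j _; by rewrite ce_sc inord_val.
- move=> w hw; have [hw0 [hch hfe]] := eig0_parts hw.
  have := @peel n.+1 false (fun j => ce (B0 C n.+1 (inord j))) (fun j => cf (B0 C n.+1 (inord j))) ka0 _
     (2 * n.+1) (ce w) (cf w) hw0.1 _ _.
  case.
  + move=> j hj; have [_ h0 h1 h2] := B0_facts hj; rewrite addn0 expr0 mul1r; split => //.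
      exact: (inOA_B0 _).1.
    exact: ka0_neq0.
  + by rewrite expr0 mul1r.
  + by rewrite subnn; apply: LI_I0 hw0.1.
  move=> c hc; exists (fun j => c j); apply: inI_parts.
  + apply: inOA_sub hw0 _; apply: inOA_sum => j _; apply: inOA_scale; apply: inOA_B0.
  + rewrite ce_sub ce_sum; move: hc; congr (I _ (_ - _)); apply: eq_bigr => j _.
    by rewrite ce_sc inord_val.
  + rewrite ch_sub ch_sum big1 ?subr0 // => j _.
    by rewrite ch_sc; have [-> _ _ _] := F j; rewrite mulr0.
Qed.
Lemma basispm n (s lam : C) : s * s = 1 -> lam = 4%:R * s ->
  eigenbasis_mod (2 * n.+1) lam (Bpm C n.+1 s).
Proof.
move=> hs hlam; subst lam.
have FF (i : 'I_n.+1) := @Bpm_facts n s hs i (ltn_ord i).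
have hs0 : s != 0 by apply/eqP => h; move: hs; rewrite h mul0r => /eqP; rewrite eq_sym oner_eq0.
have hl0 : 4%:R * s != 0 by rewrite mulf_neq0 // pnatr_eq0.
have hm4 : - 4%:R != 0 :> C by rewrite oppr_eq0 pnatr_eq0.
have E i : eig_mod (2 * n.+1) (4%:R * s) (Bpm C n.+1 s i).
  have [h1 h2 _ _] := FF i; rewrite inord_val in h1 h2.
  split; first exact: inOA_Bpm.
  apply: inI_parts.
  + by apply: inOA_sub; [apply: inOA_adX0; apply: inOA_Bpm | apply: inOA_scale; apply: inOA_Bpm].
  + by rewrite ce_sub ce_ad ce_sc.
  + by rewrite ch_sub ch_ad ch_sc.
split => //.
- move=> c [_ [_ hch]] i.
  rewrite ch_sum in hch.
  apply: (@indep n.+1 true (fun j => ch (Bpm C n.+1 s (inord j))) (fun _ => - 4%:R)) => [j hj|].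
    by have [_ _ h1 h2] := Bpm_facts hs hj; split.
  move: hch; congr (I _ _); apply: eq_bigr => j _; by rewrite ch_sc inord_val.
- move=> w hw; have [E1 _ _] := eig_parts hw; have [hw0 _] := hw.
  have := @peel n.+1 true (fun j => ch (Bpm C n.+1 s (inord j)))
     (fun j => - ch (Bpm C n.+1 s (inord j))) (fun _ => - 4%:R) _
     (2 * n.+1) (ch w) (- ch w) hw0.2 _ _.
  case.
  + move=> j hj; have [_ _ h1 h2] := Bpm_facts hs hj; split => //.
      exact: (inOA_Bpm _ _).2.
    by rewrite expr1 mulN1r opprK addNr; apply: I_0.
  + by rewrite expr1 mulN1r opprK addNr; apply: I_0.
  + by rewrite subnn; apply: LI_I0 hw0.2.
  move=> c hc; exists (fun j => c j).
  have hc' : I (2 * n.+1) (ch w - \sum_(j < n.+1) cst (c j) * ch (Bpm C n.+1 s j)).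
    by move: hc; congr (I _ (_ - _)); apply: eq_bigr => j _; rewrite inord_val.
  apply: inI_parts.
  + apply: inOA_sub hw0 _; apply: inOA_sum => j _; apply: inOA_scale; apply: inOA_Bpm.
  + rewrite ce_sub ce_sum.
    apply: (I_unscale hl0).
    set Sh := \sum_(j < n.+1) cst (c j) * ch (Bpm C n.+1 s j) in hc'.
    set Se := \sum_(j < n.+1) ce (lscale (c j) (Bpm C n.+1 s j)).
    have hS : \sum_(j < n.+1) cst (c j) * (- (4%:R * ch (Bpm C n.+1 s j)) - cst (4%:R * s) * ce (Bpm C n.+1 s j))
        = - (4%:R * Sh) - cst (4%:R * s) * Se.
      rewrite /Sh /Se mulr_sumr mulr_sumr -sumrN -sumrB; apply: eq_bigr => j _.
      rewrite ce_sc; ring.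
    have -> : cst (4%:R * s) * (ce w - Se) =
       - (- (4%:R * ch w) - cst (4%:R * s) * ce w)
       + \sum_(j < n.+1) cst (c j) * (- (4%:R * ch (Bpm C n.+1 s j)) - cst (4%:R * s) * ce (Bpm C n.+1 s j))
       - 4%:R * (ch w - Sh).
      by rewrite hS; ring.
    apply: I_sub; last exact: I_nat.
    apply: I_add; first exact: I_opp.
    apply: I_sum => j _; apply: I_scale.
    by have [h1 _ _ _] := FF j; rewrite inord_val in h1.
  + by rewrite ch_sub ch_sum; move: hc'; congr (I _ (_ - _)); apply: eq_bigr => j _; rewrite ch_sc.
Qed.
End S2.

Unset Implicit Arguments.

Theorem lemma11 (C : numClosedFieldType) (l : nat) (hl : (1 <= l)%N) :
  let L := (2 * l)%N in
  (* ad X_0 on OA/I is diagonalizable: every element is a sum of eigenvectors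
     for the eigenvalues 0, 4, -4 *)
  [/\ (forall w : loop C, inOA w ->
        exists w0 w4 wm4 : loop C,
          [/\ eig_mod L 0 w0, eig_mod L 4 w4, eig_mod L (-4) wm4
            & inI L (w - (w0 + w4 + wm4))]),
      (* the only eigenvalues are 0, 4, -4 *)
      (forall (mu : C) (w : loop C), inOA w -> ~ inI L w ->
        eig_mod L mu w -> mu = 0 \/ mu = 4 \/ mu = -4),
      (* bases of the (l-dimensional) eigenspaces *)
      [/\ eigenbasis_mod L 0 (B0 C l),
           eigenbasis_mod L 4 (Bpm C l 1)
         & eigenbasis_mod L (-4) (Bpm C l (-1))]
    & (* the 0-eigenvectors commute with each other *)
      (forall w1 w2 : loop C, eig_mod L 0 w1 -> eig_mod L 0 w2 ->
        inI L (lbr w1 w2))].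
Proof.
case: l hl => [//|n] _ L; rewrite /L.
split.
- move=> w hw; exact: part1 hw.
- move=> mu w hw hnw he; exact: part2 hw hnw he.
- split; first exact: basis0.
  + by apply: basispm; rewrite ?mulr1.
  + by apply: basispm; rewrite ?mulrNN ?mulr1 ?mulrN1.
- move=> w1 w2 h1 h2; exact: part4 h1 h2.
Qed.
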